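(* Let $\langle A,\Omega,\mu,u_S,u_R\rangle$ be a normal form cheap talk game with $|\Omega|=n$. For any value $v$ such that some cheap talk equilibrium yields expected receiver's utility $v$, there exists a cheap talk equilibrium $(\pi,s)$ with $|\mathrm{supp}(\pi)|\le n+1$ whose expected receiver's utility is $v$.
   Context: A normal form cheap talk game $\langle A,\Omega,\mu,u_S,u_R\rangle$ consists of a finite action set $A$, a finite state set $\Omega$ of size $n$, a prior $\mu\in\Delta(\Omega)$, and utilities $u_S,u_R:\Omega\times A\to\mathbb{R}$. The sender observes $\omega\sim\mu$ and sends a signal from a discrete set $\Sigma$ ($|\Sigma|\ge n+1$) via $\pi:\Omega\to\Delta(\Sigma)$; the receiver acts via $s:\Sigma\to\Delta(A)$. $\mathrm{supp}(\pi)$ is the set of signals sent with positive probability; for $\sigma\in\mathrm{supp}(\pi)$, $p_\sigma$ is the Bayesian posterior. $(\pi,s)$ is a cheap talk equilibrium if (i) for every $\omega$, each signal sent with positive probability in $\omega$ maximizes $\mathbb{E}_{a\sim s[\sigma]}u_S(\omega,a)$ over $\sigma\in\mathrm{supp}(\pi)$; (ii) for every $\sigma\in\mathrm{supp}(\pi)$, $s[\sigma]$ is supported on maximizers of $\sum_\omega p_\sigma(\omega)u_R(\omega,a)$. Expected receiver's utility is $\mathbb{E}_{\omega\sim\mu,\sigma\sim\pi[\omega],a\sim s[\sigma]}u_R(\omega,a)$. *)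

(* Defs.v *)
From mathcomp Require Import all_boot all_order all_algebra.
Set Implicit Arguments. Unset Strict Implicit. Unset Printing Implicit Defensive.
Import Order.TTheory GRing.Theory Num.Theory.
Local Open Scope ring_scope.

Section CheapTalk.
Variables (R : realFieldType) (A Omega Sigma : finType).

Definition is_distr (T : finType) (f : T -> R) : Prop :=
  (forall x, 0 <= f x) /\ \sum_(x : T) f x = 1.

Variables (mu : Omega -> R) (uS uR : Omega -> A -> R).

Definition sig_prob (pi : Omega -> Sigma -> R) (sg : Sigma) : R :=
  \sum_(w : Omega) mu w * pi w sg.

Definition supp (pi : Omega -> Sigma -> R) : {set Sigma} :=
  [set sg | 0 < sig_prob pi sg].

Definition posterior (pi : Omega -> Sigma -> R) (sg : Sigma) (w : Omega) : R :=
  mu w * pi w sg / sig_prob pi sg.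

Definition sender_util (s : Sigma -> A -> R) (w : Omega) (sg : Sigma) : R :=
  \sum_(a : A) s sg a * uS w a.

Definition receiver_post_util (pi : Omega -> Sigma -> R) (sg : Sigma) (a : A) : R :=
  \sum_(w : Omega) posterior pi sg w * uR w a.

Definition cheap_talk_eq (pi : Omega -> Sigma -> R) (s : Sigma -> A -> R) : Prop :=
  [/\ (forall w, is_distr (pi w)),
      (forall sg, is_distr (s sg)),
      (forall w sg, 0 < pi w sg ->
         sg \in supp pi /\
         forall sg', sg' \in supp pi -> sender_util s w sg' <= sender_util s w sg)
    &
      (forall sg, sg \in supp pi -> forall a, 0 < s sg a ->
         forall a', receiver_post_util pi sg a' <= receiver_post_util pi sg a)].

Definition receiver_util (pi : Omega -> Sigma -> R) (s : Sigma -> A -> R) : R :=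
  \sum_(w : Omega) \sum_(sg : Sigma) \sum_(a : A) mu w * pi w sg * s sg a * uR w a.

End CheapTalk.

(* Main.v *)
Require Import Defs.
From mathcomp Require Import all_boot all_order all_algebra.
Import Order.TTheory GRing.Theory Num.Theory.
Local Open Scope ring_scope.
Set Implicit Arguments. Unset Strict Implicit. Unset Printing Implicit Defensive.
Lemma lin_dep (R : realFieldType) (I J : finType) (S : {set I}) (x : I -> J -> R) :
  (#|J| < #|S|)%N ->
  exists c : I -> R, [/\ exists i, c i != 0, (forall i, i \notin S -> c i = 0)
                     & forall j, \sum_i c i * x i j = 0].
Proof.
move=> hJS.
pose M : 'M[R]_(#|S|, #|J|) := \matrix_(a, b) x (enum_val a) (enum_val b).
have hK : kermx M != 0.
  rewrite kermx_eq0 /row_free; apply/negP => /eqP h.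
  by move: (rank_leq_col M); rewrite h leqNgt hJS.
have /existsP [i0 /existsP [j0 hij]] : [exists i, exists j, kermx M i j != 0].
  apply: contraT => hn; rewrite -(negPf hK); apply/eqP/matrixP => i j.
  rewrite [RHS]mxE; apply/eqP; apply: contraTT hn => hij.
  by rewrite negbK; apply/existsP; exists i; apply/existsP; exists j.
have hc0 : row i0 (kermx M) *m M = 0 by rewrite -row_mul mulmx_ker row0.
move: hij hc0; set K := kermx M => hij hc0; clearbody K.
pose c0 := row i0 K.
exists (fun s => \sum_(a < #|S| | enum_val a == s) c0 0 a); split.
- exists (enum_val j0).
  rewrite (big_pred1 j0) /c0 ?mxE //.
  by move=> a /=; apply/eqP/eqP => [/enum_val_inj|->].
- move=> i hi; rewrite big_pred0 // => a; apply/negP => /eqP h.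
  by move: (enum_valP a); rewrite h (negPf hi).
- move=> j.
  apply: (@etrans _ _ ((row i0 K *m M) 0 (enum_rank j) : R)); last by rewrite hc0 mxE.
  rewrite [RHS]mxE.
  under eq_bigr do rewrite mulr_suml.
  under eq_bigr do rewrite big_mkcond.
  rewrite exchange_big /=; apply: eq_bigr => a _.
  rewrite -big_mkcond /= (big_pred1 (enum_val a)) /c0 ?mxE ?enum_rankK // => s /=.
Qed.
Lemma carath (R : realFieldType) (I J : finType) (x : I -> J -> R) (lam : I -> R) :
  (forall i, 0 <= lam i) ->
  exists lam' : I -> R, [/\ forall i, (0 <= lam' i)%R, forall i, lam' i != 0 -> lam i != 0,
     (#|[set i | lam' i != 0%R]| <= #|J|)%N
   & forall j, \sum_i lam' i * x i j = \sum_i lam i * x i j].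
Proof.
have [k] := ubnP #|[set i | lam i != 0]|.
elim: k lam => // k IH lam hk h0.
case: (leqP #|[set i | lam i != 0]| #|J|) => hle.
  by exists lam; split.
set S := [set i | lam i != 0] in hk hle.
have [c [[i1 hi1] hcS hc]] := lin_dep x hle.
have [d [[i2 hi2] hdS hd]] : exists d : I -> R, [/\ exists i, 0 < d i,
    (forall i, i \notin S -> d i = 0) & forall j, \sum_i d i * x i j = 0].
  case: (ltrgtP 0 (c i1)) => hc1.
  - by exists c; split => //; exists i1.
  - exists (fun i => - c i); split.
    + by exists i1; rewrite oppr_gt0.
    + by move=> i /hcS ->; rewrite oppr0.
    + by move=> j; under eq_bigr do rewrite mulNr; rewrite sumrN hc oppr0.
  - by rewrite -hc1 eqxx in hi1.
case: (@arg_minP _ _ _ i2 (fun i => 0 < d i) (fun i => lam i / d i) hi2) => i0 hi0 hmin.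
set t := lam i0 / d i0.
have ht : 0 <= t by rewrite divr_ge0 // ltW.
pose lam' := fun i => lam i - t * d i.
have h0' : forall i, 0 <= lam' i.
  move=> i; rewrite /lam' subr_ge0.
  case: (ltrP 0 (d i)) => hdi.
    by rewrite -ler_pdivlMr //; apply: hmin.
  by apply: (le_trans _ (h0 i)); rewrite mulr_ge0_le0.
have hsub : forall i, lam' i != 0 -> lam i != 0.
  move=> i; apply: contraNN => /eqP hl.
  have : i \notin S by rewrite inE hl eqxx.
  by move/hdS => hd0; rewrite /lam' hl hd0 mulr0 subr0.
have hi0S : i0 \in S.
  apply: contraLR hi0 => /hdS ->; by rewrite ltxx.
have hl0 : lam' i0 = 0.
  by rewrite /lam' /t divfK ?subrr // gt_eqF.
have hcard : (#|[set i | lam' i != 0%R]| < k)%N.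
  apply: (@leq_trans #|S|) => //.
  apply: proper_card; apply/properP; split.
    by apply/subsetP => i; rewrite !inE; apply: hsub.
  by exists i0 => //; rewrite inE hl0 eqxx.
have [l2 [h20 h2sub h2card h2sum]] := IH lam' hcard h0'.
exists l2; split => // [i /h2sub /hsub //|j].
rewrite h2sum /lam'.
under eq_bigr do rewrite mulrBl.
rewrite sumrB; under [X in _ - X = _]eq_bigr do rewrite -mulrA.
by rewrite -mulr_sumr hd mulr0 subr0.
Qed.
Section Main.
Variables (R : realFieldType) (A Omega Sigma : finType)
  (mu : Omega -> R) (uS uR : Omega -> A -> R).

Lemma key_post (pi : Omega -> Sigma -> R) :
  (forall w, 0 <= mu w) -> (forall w sg, 0 <= pi w sg) ->
  forall sg w, sig_prob mu pi sg * posterior mu pi sg w = mu w * pi w sg.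
Proof.
move=> m0 p0 sg w; rewrite /posterior.
have [h|h] := eqVneq (sig_prob mu pi sg) 0.
  rewrite h mul0r; symmetry; move: h; rewrite /sig_prob => /psumr_eq0P.
  by apply => // w' _; apply: mulr_ge0.
by rewrite mulrC divfK.
Qed.

Definition rv (s : Sigma -> A -> R) (pi : Omega -> Sigma -> R) (sg : Sigma) :=
  \sum_w posterior mu pi sg w * \sum_a s sg a * uR w a.

Lemma ru_eq (pi : Omega -> Sigma -> R) s :
  (forall w, 0 <= mu w) -> (forall w sg, 0 <= pi w sg) ->
  receiver_util mu uR pi s = \sum_sg sig_prob mu pi sg * rv s pi sg.
Proof.
move=> m0 p0; rewrite /receiver_util exchange_big; apply: eq_bigr => sg _.
rewrite /rv mulr_sumr; apply: eq_bigr => w _.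
rewrite mulrA key_post // mulr_sumr; apply: eq_bigr => a _.
by rewrite !mulrA.
Qed.

End Main.
Theorem mainTheorem9 (R : realFieldType) (A Omega Sigma : finType)
  (mu : Omega -> R) (uS uR : Omega -> A -> R)
  (hmu : is_distr mu) (hSigma : (#|Omega|.+1 <= #|Sigma|)%N) (v : R) :
  (exists (pi : Omega -> Sigma -> R) (s : Sigma -> A -> R),
      cheap_talk_eq mu uS uR pi s /\ receiver_util mu uR pi s = v) ->
  exists (pi : Omega -> Sigma -> R) (s : Sigma -> A -> R),
    [/\ cheap_talk_eq mu uS uR pi s,
        (#|supp mu pi| <= #|Omega|.+1)%N
      & receiver_util mu uR pi s = v].
Proof.
case=> pi [s [[h_pi h_s h_ic h_rec] hv]].
have [mu0 mu1] := hmu.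
have pi0 : forall w sg, 0 <= pi w sg by move=> w sg; case: (h_pi w).
have sp0 : forall sg, 0 <= sig_prob mu pi sg.
  by move=> sg; apply: sumr_ge0 => w _; apply: mulr_ge0.
have post0 : forall sg w, 0 <= posterior mu pi sg w.
  by move=> sg w; apply: divr_ge0 => //; apply: mulr_ge0.
have key := key_post mu0 pi0.
pose x (sg : Sigma) (j : option Omega) : R :=
  if j is Some w then posterior mu pi sg w else rv mu uR s pi sg.
have [lam' [h0' hsub hcard hsum]] := carath x sp0.
have F1 : forall w, \sum_sg lam' sg * posterior mu pi sg w = mu w.
  move=> w; have := hsum (Some w); rewrite /x => ->.
  under eq_bigr do rewrite key.
  by rewrite -mulr_sumr; case: (h_pi w) => _ ->; rewrite mulr1.
have F2 : \sum_sg lam' sg * rv mu uR s pi sg = v.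
  by have := hsum None; rewrite /x => ->; rewrite -ru_eq.
have hpost1 : forall sg, sig_prob mu pi sg != 0 -> \sum_w posterior mu pi sg w = 1.
  by move=> sg hs; rewrite /posterior -mulr_suml divff.
have [w0 hw0] : exists w, 0 < mu w.
  have : [exists w, 0 < mu w].
    apply: contraT; rewrite negb_exists => /forallP h.
    have : \sum_w mu w <= 0 by apply: sumr_le0 => w _; rewrite leNgt (h w).
    by rewrite mu1 ler10.
  by case/existsP => w hw; exists w.
have [sg0 hsg0] : exists sg, 0 < lam' sg.
  have : [exists sg, 0 < lam' sg].
    apply: contraT; rewrite negb_exists => /forallP h.
    have : \sum_sg lam' sg * posterior mu pi sg w0 = 0.
      apply: big1 => sg _.
      have -> : lam' sg = 0.
        by apply/eqP; rewrite eq_le h0' andbT leNgt (h sg).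
      by rewrite mul0r.
    by rewrite F1 => hm; rewrite hm ltxx in hw0.
  by case/existsP => sg hsg; exists sg.
pose best (w : Omega) :=
  [arg max_(sg > sg0 | 0 < lam' sg) sender_util uS s w sg]%O.
have hbest : forall w, 0 < lam' (best w) /\
    forall sg, 0 < lam' sg -> sender_util uS s w sg <= sender_util uS s w (best w).
  move=> w; rewrite /best.
  case: (@arg_maxP _ _ _ sg0 (fun sg => 0 < lam' sg) (fun sg => sender_util uS s w sg) hsg0).
  by move=> i hi hmax; split => // sg /hmax.
pose pi' (w : Omega) (sg : Sigma) : R :=
  if 0 < mu w then lam' sg * posterior mu pi sg w / mu w else (sg == best w)%:R.
have mu_eq0 : forall w, ~~ (0 < mu w) -> mu w = 0.
  by move=> w h; apply/eqP; rewrite eq_le mu0 andbT leNgt h.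
have P1 : forall w sg, mu w * pi' w sg = lam' sg * posterior mu pi sg w.
  move=> w sg; rewrite /pi'; case: ifP => hmw.
    by rewrite mulrC divfK // gt_eqF.
  have hm := mu_eq0 w (negbT hmw).
  by rewrite hm mul0r /posterior hm !mul0r mulr0.
have pi'0 : forall w sg, 0 <= pi' w sg.
  move=> w sg; rewrite /pi'; case: ifP => hmw.
    by apply: divr_ge0; [apply: mulr_ge0 | apply: ltW].
  by rewrite ler0n.
have sp' : forall sg, sig_prob mu pi' sg = lam' sg.
  move=> sg; rewrite /sig_prob; under eq_bigr do rewrite P1.
  rewrite -mulr_sumr; have [->|hl] := eqVneq (lam' sg) 0; first by rewrite mul0r.
  by rewrite hpost1 ?mulr1 //; apply: hsub.
have postE : forall sg w, lam' sg != 0 ->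
    posterior mu pi' sg w = posterior mu pi sg w.
  by move=> sg w hl; rewrite {1}/posterior sp' P1 mulrC mulKf.
have suppE : forall sg, (sg \in supp mu pi') = (0 < lam' sg).
  by move=> sg; rewrite /supp inE sp'.
have supp_old : forall sg, 0 < lam' sg -> sg \in supp mu pi.
  move=> sg hl; rewrite /supp inE lt0r sp0 andbT; apply: hsub.
  by rewrite gt_eqF.
exists pi', s; split.
- split => //.
  + move=> w; split; first by move=> sg; apply: pi'0.
    rewrite /pi'; case: (boolP (0 < mu w)) => hmw.
      by rewrite -mulr_suml F1 divff // gt_eqF.
    rewrite (bigD1 (best w)) //= eqxx big1 ?addr0 // => sg /negPf ->.
    by [].
  + move=> w sg; rewrite /pi'; case: ifP => hmw hpos.
      have hl : lam' sg != 0.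
        by apply: contraTneq hpos => ->; rewrite !mul0r ltxx.
      have hp : posterior mu pi sg w != 0.
        by apply: contraTneq hpos => ->; rewrite mulr0 mul0r ltxx.
      have hl' : 0 < lam' sg by rewrite lt_def hl h0'.
      have hpi : 0 < pi w sg.
        rewrite lt_def pi0 andbT; apply: contraNneq hp => hz.
        by rewrite /posterior hz mulr0 mul0r.
      have [_ hmax] := h_ic w sg hpi.
      split; first by rewrite suppE.
      by move=> sg'; rewrite suppE => /supp_old; apply: hmax.
    have hsg : sg = best w.
      by apply/eqP; move: hpos; case: (sg == best w) => //; rewrite ltxx.
    have [hb1 hb2] := hbest w.
    split; first by rewrite hsg suppE.
    by move=> sg'; rewrite suppE hsg; apply: hb2.
  + move=> sg; rewrite suppE => hl a ha a'.
    have hl0 : lam' sg != 0 by rewrite gt_eqF.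
    rewrite /receiver_post_util.
    under eq_bigr do rewrite postE //.
    under [X in _ <= X]eq_bigr do rewrite postE //.
    exact: h_rec (supp_old _ hl) a ha a'.
- apply: (leq_trans (subset_leq_card (_ : supp mu pi' \subset [set sg | lam' sg != 0]))).
    by apply/subsetP => sg; rewrite suppE inE => h; rewrite gt_eqF.
  by move: hcard; rewrite card_option.
- rewrite ru_eq // -F2; apply: eq_bigr => sg _; rewrite sp'.
  have [->|hl] := eqVneq (lam' sg) 0; first by rewrite !mul0r.
  by congr (_ * _); rewrite /rv; apply: eq_bigr => w _; rewrite postE.
Qed.
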